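(* Let $\rho_1,\rho_2$ be pure $n$-qubit states ($n\ge1$), $O$ a Hermitian operator, and $p\in[0,1)$. Let $\widetilde{\rho}_j=(1-p)\rho_j+p\,\mathbb{I}/2^n$ ($j=1,2$) be their images under global depolarizing noise, and assume $\mathrm{Tr}[\rho_1O]\ne\mathrm{Tr}[\rho_2O]$. For an integer $M\ge2$ consider the two Virtual Distillation estimators $$C_m^{(A)}(\widetilde{\rho})=\frac{\mathrm{Tr}[\widetilde{\rho}^MO]}{\mathrm{Tr}[\widetilde{\rho}^M]},\qquad C_m^{(B)}(\widetilde{\rho})=\frac{\mathrm{Tr}[\widetilde{\rho}^MO]}{\lambda^M},$$ where $\lambda$ is the largest eigenvalue of $\widetilde{\rho}$, with error mitigation costs $\gamma^{(B)}=\lambda^{-2M}$ and $\gamma^{(A)}\ge(\mathrm{Tr}[\widetilde{\rho}^M])^{-2}$. Let $\chi^{(A)},\chi^{(B)}$ be the corresponding relative resolvabilities of the two points. Then $$\chi^{(A)}\le\chi^{(B)}=\Gamma(n,M,p):=\frac{1}{(1-p)^2}\Big[\Big(1-p+\frac{p}{2^n}\Big)^M-\Big(\frac{p}{2^n}\Big)^M\Big]^2,$$ and $\Gamma(n,M,p)\le1$ for all $n\ge1$, $M\ge2$, $p\in[0,1)$; moreover $\Gamma$ is monotonically decreasing in $M$ (with asymptotically exponential decay) for $n\ge1$, $M\ge2$, and $\Gamma(1,2,p)=1$ for all $p$.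
   Context: The error mitigation cost $\gamma$ is the ratio of the variance of the mitigated estimate to the variance of the noisy estimate $\mathrm{Tr}[\widetilde{\rho}O]$; the stated values/bounds for $\gamma^{(A)},\gamma^{(B)}$ are the model used (they follow from estimating $\mathrm{Tr}[\widetilde\rho O]$, $\mathrm{Tr}[\widetilde\rho^M O]$, $\mathrm{Tr}[\widetilde\rho^M]$ via ancilla measurements whose statistical variances are state-independent, with the $M$-copy variance no smaller than the single-copy one). Note $\lambda$ and $\mathrm{Tr}[\widetilde\rho^M]$ are the same for $\widetilde\rho_1,\widetilde\rho_2$. The relative resolvability of the two points is $\chi=\frac{1}{\gamma}\Big(\frac{C_m(\widetilde{\rho}_1)-C_m(\widetilde{\rho}_2)}{\mathrm{Tr}[\widetilde{\rho}_1O]-\mathrm{Tr}[\widetilde{\rho}_2O]}\Big)^2$. *)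

(* Defs.v *)
From HB Require Import structures.
From mathcomp Require Import all_boot all_order all_algebra.
From mathcomp Require Export complex.
Set Implicit Arguments. Unset Strict Implicit. Unset Printing Implicit Defensive.
Import Order.TTheory GRing.Theory Num.Theory.
Local Open Scope ring_scope.

Definition adj (C : numClosedFieldType) (m n : nat) (A : 'M[C]_(m, n)) : 'M[C]_(n, m) :=
  map_mx Num.conj A^T.

Definition is_hermitian_mx (C : numClosedFieldType) (d : nat) (O : 'M[C]_d) : Prop :=
  adj O = O.

Definition pure_state (C : numClosedFieldType) (d : nat) (rho : 'M[C]_d) : Prop :=
  exists psi : 'cV[C]_d, adj psi *m psi = 1%:M /\ rho = psi *m adj psi.

Definition mxpow (C : pzRingType) (d : nat) (A : 'M[C]_d) (k : nat) : 'M[C]_d :=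
  iter k (mulmx A) 1%:M.

Definition depolarize (C : numClosedFieldType) (n : nat) (p : C)
    (rho : 'M[C]_(2 ^ n)) : 'M[C]_(2 ^ n) :=
  (1 - p) *: rho + (p / (2 ^ n)%N%:R) *: 1%:M.

(* l is the largest eigenvalue of A (all eigenvalues are real and <= l) *)
Definition is_largest_eigenvalue (C : numClosedFieldType) (d : nat)
    (A : 'M[C]_d) (l : C) : Prop :=
  eigenvalue A l /\ (forall a, eigenvalue A a -> a <= l).

Definition expval (C : numClosedFieldType) (d : nat) (rho O : 'M[C]_d) : C :=
  \tr (rho *m O).

Definition CmA (C : numClosedFieldType) (d : nat) (M : nat) (rt O : 'M[C]_d) : C :=
  \tr (mxpow rt M *m O) / \tr (mxpow rt M).

Definition CmB (C : numClosedFieldType) (d : nat) (M : nat) (lam : C)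
    (rt O : 'M[C]_d) : C :=
  \tr (mxpow rt M *m O) / lam ^+ M.

Definition resolvability (C : numClosedFieldType) (gamma c1 c2 t1 t2 : C) : C :=
  gamma^-1 * ((c1 - c2) / (t1 - t2)) ^+ 2.

Definition Gamma (R : realFieldType) (n M : nat) (p : R) : R :=
  ((1 - p) ^+ 2)^-1 *
  ((1 - p + p / (2 ^ n)%N%:R) ^+ M - (p / (2 ^ n)%N%:R) ^+ M) ^+ 2.
Arguments depolarize [C] n p rho.

(* Main.v *)
Require Import Defs.
From HB Require Import structures.
From mathcomp Require Import all_boot all_order all_algebra.
From mathcomp Require Import complex.
From mathcomp.algebra_tactics Require Import ring lra.
Import Order.TTheory GRing.Theory Num.Theory.
Local Open Scope ring_scope.

Section Real.
Variable R : rcfType.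

Lemma d_ge2 (n : nat) : (1 <= n)%N -> 2 <= ((2 ^ n)%N%:R : R).
Proof.
move=> hn; have h : (2 <= 2 ^ n)%N.
  by case: n hn => // n _; rewrite expnS leq_pmulr // expn_gt0.
by rewrite -(ler_nat R) in h.
Qed.

Lemma diff_le (l q : R) (M : nat) : 0 <= q -> q <= l -> l + q <= 1 -> (1 <= M)%N ->
  0 <= l ^+ M - q ^+ M <= l - q.
Proof.
move=> q0 ql lq1; elim: M => // -[|M] IH _; first by rewrite !expr1 subr_ge0 ql lexx.
have [h0 h1] := andP (IH erefl).
have qM0 : 0 <= q ^+ M.+1 by rewrite exprn_ge0.
have qMq : q ^+ M.+1 <= q by rewrite exprS ler_piMr // exprn_ile1 //; lra.
have lM0 : 0 <= l ^+ M.+1 by rewrite exprn_ge0 //; lra.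
rewrite (exprS l) (exprS q).
have -> : l * l ^+ M.+1 - q * q ^+ M.+1 = l * (l ^+ M.+1 - q ^+ M.+1) + q ^+ M.+1 * (l - q) by ring.
apply/andP; split; first by nra.
nra.
Qed.

End Real.

Section Real2.
Variable R : rcfType.

Lemma setup {n : nat} {p : R} : (1 <= n)%N -> 0 <= p < 1 ->
  let d := ((2 ^ n)%N%:R : R) in let q := p / d in let l := 1 - p + q in
  [/\ 2 <= d, 0 <= q, q * d = p, q <= l & l + q <= 1].
Proof.
move=> hn /andP[p0 p1] d q l.
have d2 : 2 <= d by apply: d_ge2.
have dn0 : d != 0 by apply/eqP => h; rewrite h in d2; lra.
have qd : q * d = p by rewrite /q mulfVK.
have q0 : 0 <= q by rewrite /q divr_ge0 //; lra.
split => //; rewrite /l; nra.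
Qed.

Lemma Gamma_le1 (n M : nat) (p : R) : (1 <= n)%N -> (2 <= M)%N -> 0 <= p < 1 ->
        Gamma n M p <= 1.
Proof.
move=> hn hM hp; have [d2 q0 qd ql lq] := setup hn hp.
move: (hp) => /andP[p0 p1].
rewrite /Gamma.
set d := ((2 ^ n)%N%:R : R) in d2 q0 qd ql lq *; set q := p / d in q0 qd ql lq *.
have [h0 h1] := andP ((@diff_le _ _ _ M q0) ql lq (ltnW hM)).
have a0 : 0 < (1 - p) ^+ 2 by rewrite exprn_gt0 // subr_gt0.
rewrite ler_pdivrMl // mulr1.
have e : 1 - p + q - q = 1 - p by ring.
rewrite e in h1.
rewrite lerXn2r // ?nnegrE //; lra.
Qed.

Lemma Gamma_decr (n M : nat) (p : R) : (1 <= n)%N -> (2 <= M)%N -> 0 <= p < 1 ->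
        Gamma n M.+1 p <= Gamma n M p.
Proof.
move=> hn hM hp; have [d2 q0 qd ql lq] := setup hn hp.
move: (hp) => /andP[p0 p1].
rewrite /Gamma.
set d := ((2 ^ n)%N%:R : R) in d2 q0 qd ql lq *; set q := p / d in q0 qd ql lq *.
set l := 1 - p + q in ql lq *.
have a0 : 0 <= ((1 - p) ^+ 2)^-1 by rewrite invr_ge0 sqr_ge0.
apply: ler_wpM2l => //.
have [h0 _] := andP ((@diff_le _ _ _ M.+1 q0) ql lq isT).
have [h1 _] := andP ((@diff_le _ _ _ M q0) ql lq (ltnW hM)).
suff main : l ^+ M.+1 - q ^+ M.+1 <= l ^+ M - q ^+ M by rewrite lerXn2r ?nnegrE.
case: M hM h0 h1 => // k _ h0 _.
have w0 : q ^+ k <= l ^+ k by rewrite lerXn2r ?nnegrE //; lra.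
have u0 : 0 <= q ^+ k by rewrite exprn_ge0.
have l0 : 0 <= l by lra.
move: h0; rewrite !(exprS l) !(exprS q) => h0.
have key : q * q ^+ k * (1 - q) <= l * l ^+ k * (1 - l).
  have e1 : 1 - l = q * (d - 1) by rewrite /l -qd; ring.
  have e2 : l * (d - 1) - (1 - q) = (1 - p) * (d - 2) by rewrite /l -qd; ring.
  rewrite e1.
  have : 0 <= (1 - p) * (d - 2) by nra.
  rewrite -e2 => h2.
  have h3 : 0 <= q * (l ^+ k - q ^+ k) by apply: mulr_ge0 => //; lra.
  have h4 : 0 <= q * l ^+ k * (l * (d - 1) - (1 - q)).
    by apply: mulr_ge0 => //; apply: mulr_ge0 => //; apply: exprn_ge0.
  have h5 : 0 <= (1 - q) * (q * (l ^+ k - q ^+ k)) by apply: mulr_ge0 => //; lra.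
  nra.
nra.
Qed.

Lemma Gamma_exp (n : nat) (p : R) : (1 <= n)%N -> 0 < p < 1 ->
        exists c r : R, 0 <= r < 1 /\
          forall M : nat, (2 <= M)%N -> Gamma n M p <= c * r ^+ M.
Proof.
move=> hn hp'; have hp : 0 <= p < 1 by lra.
have [d2 q0 qd ql lq] := setup hn hp.
move: (hp') => /andP[p0 p1].
set d := ((2 ^ n)%N%:R : R) in d2 q0 qd ql lq *; set q := p / d in q0 qd ql lq *.
set l := 1 - p + q in ql lq *.
exists ((1 - p) ^+ 2)^-1, (l ^+ 2); split.
  have qp : 0 < q by rewrite /q divr_gt0 //; lra.
  have ql' : q < p by rewrite -qd; nra.
  have l0 : 0 <= l by lra.
  apply/andP; split; first by rewrite sqr_ge0.
  rewrite expr2; nra.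
move=> M hM; rewrite /Gamma -/d -/q -/l.
have a0 : 0 <= ((1 - p) ^+ 2)^-1 by rewrite invr_ge0 sqr_ge0.
apply: ler_wpM2l => //.
have [h0 _] := andP ((@diff_le _ _ _ M q0) ql lq (ltnW hM)).
have : 0 <= q ^+ M by rewrite exprn_ge0.
move=> hqM.
have main : l ^+ M - q ^+ M <= l ^+ M by lra.
rewrite -exprM mulnC exprM lerXn2r // ?nnegrE //; lra.
Qed.

Lemma Gamma_12 (p : R) : 0 <= p < 1 -> Gamma 1 2 p = 1.
Proof.
move=> /andP[p0 p1]; rewrite /Gamma /=.
have h : 1 - p != 0 by apply/eqP; lra.
field; rewrite ?h //.
Qed.

End Real2.

Lemma mxpow_lin (F : comNzRingType) (d : nat) (P : 'M[F]_d) (a b : F) (k : nat) :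
  P *m P = P ->
  mxpow (a *: P + b *: 1%:M) k = ((a + b) ^+ k - b ^+ k) *: P + b ^+ k *: 1%:M.
Proof.
move=> PP; elim: k => [|k IH].
  by rewrite /mxpow /= !expr0 subrr scale0r add0r scale1r.
rewrite /mxpow /= -/(mxpow _ k) IH.
rewrite !mulmxDl !mulmxDr -!scalemxAl -!scalemxAr !mul1mx !mulmx1 PP !scalerA.
set c := (a + b) ^+ k - b ^+ k.
rewrite !addrA -!scalerDl !exprS; congr (_ *: _ + _ *: _); rewrite /c; ring.
Qed.

Lemma tr_lin (F : comNzRingType) (d : nat) (P O : 'M[F]_d) (x y : F) :
  \tr ((x *: P + y *: 1%:M) *m O) = x * \tr (P *m O) + y * \tr O.
Proof. by rewrite mulmxDl -!scalemxAl mul1mx mxtraceD !mxtraceZ. Qed.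

Lemma tr_lin1 (F : comNzRingType) (d : nat) (P : 'M[F]_d) (x y : F) :
  \tr (x *: P + y *: 1%:M) = x * \tr P + y * d%:R.
Proof. by rewrite mxtraceD !mxtraceZ mxtrace1. Qed.

Lemma eig (F : fieldType) (d : nat) (P : 'M[F]_d) (w : 'rV[F]_d) (a b lam : F) :
  P *m P = P -> w *m P = w -> w != 0 -> a != 0 ->
  eigenvalue (a *: P + b *: 1%:M) (a + b) /\
  (eigenvalue (a *: P + b *: 1%:M) lam -> lam = b \/ lam = a + b).
Proof.
move=> PP wP w0 a0; split.
  apply/eigenvalueP; exists w => //.
  by rewrite mulmxDr -!scalemxAr wP mulmx1 scalerDl.
move/eigenvalueP => [v hv v0].
rewrite mulmxDr -!scalemxAr mulmx1 in hv.
have h1 : a *: (v *m P) = (lam - b) *: v.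
  by rewrite scalerBl -hv addrK.
have h2 : a *: (v *m P) = (lam - b) *: (v *m P).
  by rewrite -[in LHS]PP mulmxA scalemxAl h1 -scalemxAl.
have [->|lb] := eqVneq lam b; first by left.
right.
have vP : v *m P = v.
  apply: (scalerI (a := lam - b)); first by rewrite subr_eq0.
  by rewrite -h1 h2.
rewrite vP in h1.
have : (a - (lam - b)) *: v = 0 by rewrite scalerBl h1 subrr.
move/eqP; rewrite scaler_eq0 (negbTE v0) orbF subr_eq0 => /eqP ->.
ring.
Qed.

Lemma pure_facts (C : numClosedFieldType) (d : nat) (psi : 'cV[C]_d) :
  adj psi *m psi = 1%:M ->
  let P := psi *m adj psi in
  [/\ P *m P = P, adj psi *m P = adj psi, adj psi != 0 & \tr P = 1].
Proof.
move=> u P; split.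
- by rewrite /P mulmxA -(mulmxA psi) u mulmx1.
- by rewrite /P mulmxA u mul1mx.
- apply/eqP => h; move: u; rewrite h mul0mx => /matrixP /(_ ord0 ord0).
  by rewrite !mxE /= => /eqP; rewrite eq_sym oner_eq0.
- by rewrite /P mxtrace_mulC u mxtrace1.
Qed.

Section P1.
Local Open Scope complex_scope.

Lemma part1 (R : rcfType) :
  (forall (n M : nat) (p : R) (rho1 rho2 O : 'M[R[i]]_(2 ^ n))
          (lam1 lam2 gammaA : R[i]),
      (1 <= n)%N -> (2 <= M)%N -> 0 <= p < 1 ->
      pure_state rho1 -> pure_state rho2 -> is_hermitian_mx O ->
      expval rho1 O != expval rho2 O ->
      let rt1 := depolarize n (real_complex R p) rho1 in
      let rt2 := depolarize n (real_complex R p) rho2 in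
      is_largest_eigenvalue rt1 lam1 ->
      is_largest_eigenvalue rt2 lam2 ->
      (\tr (mxpow rt1 M)) ^- 2 <= gammaA ->
      let gammaB := lam1 ^- (2 * M) in
      let chiA := resolvability gammaA (CmA M rt1 O) (CmA M rt2 O)
                    (expval rt1 O) (expval rt2 O) in
      let chiB := resolvability gammaB (CmB M lam1 rt1 O) (CmB M lam2 rt2 O)
                    (expval rt1 O) (expval rt2 O) in
      chiA <= chiB /\ chiB = real_complex R (Gamma n M p)).
Proof.
move=> n M p rho1 rho2 O lam1 lam2 gA hn hM hp [psi1 [u1 e1]] [psi2 [u2 e2]] _ hneq.
move=> rt1 rt2 hl1 hl2 hgA gammaB chiA chiB.
have [d2 q0 qd ql lq] := @setup R n p hn hp.
move: (hp) => /andP[p0 p1].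
set dR := ((2 ^ n)%N%:R : R) in d2 q0 qd ql lq *.
set q := p / dR in q0 qd ql lq *.
set ar := 1 - p.
set lr := ar + q.
have ar0 : 0 < ar by rewrite /ar; lra.
have a0' : 0 < ar%:C by rewrite -(rmorph0 (real_complex R)) ltcR.
have a0 : ar%:C != 0 by rewrite lt0r_neq0.
have rtE : forall rho, depolarize n p%:C rho = ar%:C *: rho + q%:C *: 1%:M.
  by move=> rho; rewrite /depolarize /ar /q rmorphB rmorph1 fmorph_div rmorph_nat.
have [PP1 wP1 w01 tr1] := @pure_facts _ _ psi1 u1.
have [PP2 wP2 w02 tr2] := @pure_facts _ _ psi2 u2.
rewrite -e1 in PP1 wP1 tr1; rewrite -e2 in PP2 wP2 tr2.
set L := ar%:C + q%:C.
have lamE : forall rho (w : 'rV_(2 ^ n)) lam, rho *m rho = rho -> w *m rho = w -> w != 0 ->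
    is_largest_eigenvalue (depolarize n p%:C rho) lam -> lam = L.
  move=> rho w lam PP wP w0 [ev hmax]; rewrite rtE in ev hmax.
  have [evL evlam] := @eig _ _ rho w ar%:C q%:C lam PP wP w0 a0.
  case: (evlam ev) => // hq; exfalso.
  move: (hmax _ evL); rewrite hq /L -rmorphD lecR; lra.
have l1 := lamE _ _ _ PP1 wP1 w01 hl1.
have l2 := lamE _ _ _ PP2 wP2 w02 hl2.
set b := q%:C.
set cr := lr ^+ M - q ^+ M.
have cE : L ^+ M - b ^+ M = cr%:C by rewrite /cr rmorphB !rmorphXn rmorphD.
set Tr := cr + q ^+ M * dR.
have bM : b ^+ M = (q ^+ M)%:C by rewrite rmorphXn.
have dC : ((2 ^ n)%N%:R : R[i]) = dR%:C by rewrite rmorph_nat.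
have TrE : Tr%:C = cr%:C + (q ^+ M)%:C * dR%:C by rewrite -rmorphM -rmorphD.
have TE : \tr (mxpow rt1 M) = Tr%:C.
  by rewrite /rt1 rtE mxpow_lin // tr_lin1 tr1 mulr1 cE bM dC TrE.
have TE2 : \tr (mxpow rt2 M) = Tr%:C.
  by rewrite /rt2 rtE mxpow_lin // tr_lin1 tr2 mulr1 cE bM dC TrE.
have lr0 : 0 < lr by rewrite /lr; lra.
have Tr0 : 0 < Tr.
  have h1 : 0 < lr ^+ M by rewrite exprn_gt0.
  have h2 : 0 <= q ^+ M by rewrite exprn_ge0.
  rewrite /Tr /cr; nra.
have T0 : 0 < Tr%:C by rewrite -(rmorph0 (real_complex R)) ltcR.
have GammaE : (Gamma n M p)%:C = ((ar%:C) ^+ 2)^-1 * (L ^+ M - b ^+ M) ^+ 2.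
  by rewrite /Gamma -/dR -/q -/ar cE rmorphM fmorphV !rmorphXn.
set t1 := \tr (rho1 *m O); set t2 := \tr (rho2 *m O); set tO := \tr O.
have tn : t1 - t2 != 0 by rewrite subr_eq0.
have LM0 : L ^+ M != 0.
  by rewrite expf_neq0 // /L -rmorphD -(rmorph0 (real_complex R)) (inj_eq (@complexI R)); apply/eqP; lra.
set Y := (cr%:C / (Tr%:C * ar%:C)) ^+ 2.
have chiBE : chiB = Tr%:C ^+ 2 * Y.
  rewrite /chiB /resolvability /CmB /expval /gammaB /rt1 /rt2 !rtE !mxpow_lin // !tr_lin.
  rewrite -/t1 -/t2 -/tO l1 l2 mulnC exprM cE /Y.
  have den : ar%:C * t1 + b * tO - (ar%:C * t2 + b * tO) != 0.
    have -> : ar%:C * t1 + b * tO - (ar%:C * t2 + b * tO) = ar%:C * (t1 - t2) by ring.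
    by rewrite mulf_neq0.
  field.
  by apply/and4P; split; [exact: a0 | exact: lt0r_neq0 T0 | exact: den | exact: LM0].
have den : ar%:C * t1 + b * tO - (ar%:C * t2 + b * tO) != 0.
  have -> : ar%:C * t1 + b * tO - (ar%:C * t2 + b * tO) = ar%:C * (t1 - t2) by ring.
  by rewrite mulf_neq0.
have hgA' := hgA; rewrite TE in hgA'.
have g0 : 0 < Tr%:C ^- 2 by rewrite invr_gt0 exprn_gt0.
have gp : 0 < gA by exact: lt_le_trans hgA'.
have chiAE : chiA = gA^-1 * Y.
  rewrite /chiA /resolvability /CmA TE TE2.
  rewrite /expval /rt1 /rt2 !rtE !mxpow_lin // !tr_lin -/t1 -/t2 -/tO cE /Y.
  field.
  by apply/and4P; split; [exact: a0 | exact: lt0r_neq0 T0 | exact: lt0r_neq0 gp | exact: den].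
split.
  rewrite chiAE chiBE; apply: ler_wpM2r.
    have YE : Y = ((cr / (Tr * ar)) ^+ 2)%:C by rewrite /Y rmorphXn fmorph_div rmorphM.
    by rewrite YE -(rmorph0 (real_complex R)) lecR sqr_ge0.
  by rewrite -[Tr%:C ^+ 2]invrK lef_pV2 ?posrE.
rewrite chiBE GammaE cE /Y.
field.
by apply/andP; split; [exact: a0 | exact: lt0r_neq0 T0].
Qed.

End P1.

Theorem proposition3 (R : rcfType) :
  (forall (n M : nat) (p : R) (rho1 rho2 O : 'M[R[i]]_(2 ^ n))
          (lam1 lam2 gammaA : R[i]),
      (1 <= n)%N -> (2 <= M)%N -> 0 <= p < 1 ->
      pure_state rho1 -> pure_state rho2 -> is_hermitian_mx O ->
      expval rho1 O != expval rho2 O ->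
      let rt1 := depolarize n (real_complex R p) rho1 in
      let rt2 := depolarize n (real_complex R p) rho2 in
      is_largest_eigenvalue rt1 lam1 ->
      is_largest_eigenvalue rt2 lam2 ->
      (\tr (mxpow rt1 M)) ^- 2 <= gammaA ->
      let gammaB := lam1 ^- (2 * M) in
      let chiA := resolvability gammaA (CmA M rt1 O) (CmA M rt2 O)
                    (expval rt1 O) (expval rt2 O) in
      let chiB := resolvability gammaB (CmB M lam1 rt1 O) (CmB M lam2 rt2 O)
                    (expval rt1 O) (expval rt2 O) in
      chiA <= chiB /\ chiB = real_complex R (Gamma n M p))
  /\ (forall (n M : nat) (p : R), (1 <= n)%N -> (2 <= M)%N -> 0 <= p < 1 ->
        Gamma n M p <= 1)
  /\ (forall (n M : nat) (p : R), (1 <= n)%N -> (2 <= M)%N -> 0 <= p < 1 ->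
        Gamma n M.+1 p <= Gamma n M p)
  /\ (forall (n : nat) (p : R), (1 <= n)%N -> 0 < p < 1 ->
        exists c r : R, 0 <= r < 1 /\
          forall M : nat, (2 <= M)%N -> Gamma n M p <= c * r ^+ M)
  /\ (forall p : R, 0 <= p < 1 -> Gamma 1 2 p = 1).
Proof.
split; first exact: part1.
split; first exact: Gamma_le1.
split; first exact: Gamma_decr.
split; first exact: Gamma_exp.
exact: Gamma_12.
Qed.
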